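(* For all odd integers $n\ge1$ and real numbers $a\ge1$, $x\in(0,\pi)$, we have $S^*_{n,a}(x)\ge\sin(x)$. Equality holds if and only if $n=1$.
   Context: For a real number $a$ and integers $0\le m$, $\binom{m+a}{m}=\frac{(a+1)(a+2)\cdots(a+m)}{m!}$ (equal to $1$ when $m=0$). For an integer $n\ge1$, $S^*_{n,a}(x)=\sum_{1\le j\le n,\ j\text{ odd}}\binom{n+a-j}{n-j}\sin(jx)$. *)

(* Defs.v *)
From Stdlib Require Import Reals Lra Lia Arith Factorial.
Open Scope R_scope.

Fixpoint rising (a : R) (m : nat) : R :=
  match m with
  | O => 1
  | S m' => rising a m' * (a + INR m)
  end.

(* binom(m + a, m) = (a+1)(a+2)...(a+m)/m! *)
Definition gbinom (m : nat) (a : R) : R := rising a m / INR (fact m).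

(* S*_{n,a}(x) = sum_{1<=j<=n, j odd} binom(n+a-j, n-j) sin(j x) *)
Fixpoint Sstar_aux (n k : nat) (a x : R) : R :=
  match k with
  | O => 0
  | S k' => Sstar_aux n k' a x +
            (if Nat.odd k then gbinom (n - k) a * sin (INR k * x) else 0)
  end.

Definition Sstar (n : nat) (a x : R) : R := Sstar_aux n n a x.

(* Main.v *)
Require Import Defs.
From Stdlib Require Import Reals Lra Lia Arith Factorial.
Open Scope R_scope.

Lemma gstep (a : R) (i : nat) :
  gbinom (S i) a = gbinom i a * (a + INR (S i)) / INR (S i).
Proof.
  unfold gbinom. cbn [rising]. rewrite fact_simpl, mult_INR.
  assert (INR (fact i) <> 0) by (apply not_0_INR; apply fact_neq_0).
  assert (INR (S i) <> 0) by (apply not_0_INR; lia).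
  field. split; auto.
Qed.

Lemma g0 (a : R) : gbinom 0 a = 1.
Proof. unfold gbinom. simpl. field. Qed.

Lemma g_ge (a : R) : 1 <= a -> forall i, INR i + 1 <= gbinom i a.
Proof.
  intros Ha i. induction i.
  - rewrite g0. simpl. lra.
  - rewrite gstep. rewrite S_INR in *.
    assert (0 < INR i + 1) by (pose proof (pos_INR i); lra).
    apply (Rmult_le_reg_r (INR i + 1)); auto.
    unfold Rdiv. rewrite Rmult_assoc, Rinv_l by lra. nra.
Qed.

Lemma g_inc (a : R) : 1 <= a -> forall i, 1 <= gbinom (S i) a - gbinom i a.
Proof.
  intros Ha i. pose proof (g_ge a Ha i). rewrite gstep. rewrite S_INR.
  assert (0 < INR i + 1) by (pose proof (pos_INR i); lra).
  replace (gbinom i a * (a + (INR i + 1)) / (INR i + 1) - gbinom i a)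
    with (gbinom i a * a / (INR i + 1)) by (field; lra).
  apply (Rmult_le_reg_r (INR i + 1)); auto.
  unfold Rdiv. rewrite Rmult_assoc, Rinv_l by lra. nra.
Qed.

Definition dd (u : nat -> R) (k : nat) : R :=
  match k with O => u O | S k' => u (S k') - u k' end.

Lemma abel (s : nat -> R) : forall m (u : nat -> R),
  sum_f_R0 (fun l => u (m - l)%nat * s l) m =
  sum_f_R0 (fun l => dd u (m - l)%nat * sum_f_R0 s l) m.
Proof.
  induction m; intros u.
  - simpl. ring.
  - rewrite !tech5. replace (S m - S m)%nat with 0%nat by lia. change (dd u 0) with (u 0%nat).
    rewrite (sum_eq (fun l => u (S m - l)%nat * s l)
                    (fun l => (fun k => u (S k)) (m - l)%nat * s l)).
    2:{ intros i Hi. replace (S m - i)%nat with (S (m - i)) by lia. reflexivity. }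
    rewrite (IHm (fun k => u (S k))).
    destruct m.
    + simpl. ring.
    + rewrite !tech5. replace (S m - S m)%nat with 0%nat by lia.
      change (dd (fun k => u (S k)) 0) with (u 1%nat).
      rewrite (sum_eq (fun l => dd (fun k => u (S k)) (S m - l) * sum_f_R0 s l)
                      (fun l => dd u (S (S m) - l) * sum_f_R0 s l)).
      2:{ intros i Hi. replace (S m - i)%nat with (S (m - i)) by lia.
          replace (S (S m) - i)%nat with (S (S (m - i))) by lia. reflexivity. }
      replace (S (S m) - S m)%nat with 1%nat by lia.
      change (dd u 1) with (u 1%nat - u 0%nat).
      ring.
Qed.

Lemma sstar_odd (n : nat) (a x : R) : forall i,
  Sstar_aux n (2*i+1) a x =
  sum_f_R0 (fun l => gbinom (n - (2*l+1)) a * sin (INR (2*l+1) * x)) i.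
Proof.
  induction i.
  - simpl. ring.
  - rewrite tech5, <- IHi.
    replace (2 * S i + 1)%nat with (S (S (2*i+1))) by lia.
    cbn [Sstar_aux].
    replace (S (S (2*i+1))) with (2 * S i + 1)%nat by lia.
    replace (S (2*i+1)) with (2 * S i)%nat by lia.
    rewrite Nat.odd_odd.
    assert (Nat.odd (2 * S i) = false).
    { replace (2 * S i)%nat with (S i + S i)%nat by lia. rewrite Nat.odd_add.
      destruct (Nat.odd (S i)); reflexivity. }
    rewrite H. ring.
Qed.

Lemma Q_id (x : R) : forall l,
  sum_f_R0 (fun j => sin (INR (2*j+1) * x)) l * sin x = (sin (INR (l+1) * x))^2.
Proof.
  induction l.
  - simpl. rewrite Rmult_1_l. ring.
  - rewrite tech5, Rmult_plus_distr_r, IHl.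
    set (A := INR (S l + 1) * x). set (B := INR (l+1) * x).
    assert (E1 : INR (2 * S l + 1) * x = A + B).
    { unfold A, B. rewrite !plus_INR, !mult_INR, !S_INR. simpl. ring. }
    assert (E2 : x = A - B).
    { unfold A, B. rewrite !plus_INR, !S_INR. simpl. ring. }
    rewrite E1. replace (sin x) with (sin (A - B)) by (rewrite <- E2; reflexivity). rewrite sin_plus, sin_minus.
    pose proof (sin2_cos2 A). pose proof (sin2_cos2 B). unfold Rsqr in *.
    nra.
Qed.

Lemma Q_nonneg (x : R) : 0 < sin x -> forall l,
  0 <= sum_f_R0 (fun j => sin (INR (2*j+1) * x)) l.
Proof.
  intros Hs l. pose proof (Q_id x l).
  destruct (Rle_or_lt 0 (sum_f_R0 (fun j => sin (INR (2*j+1) * x)) l)); auto.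
  assert (0 <= sin (INR (l+1) * x) ^ 2) by (apply pow2_ge_0). nra.
Qed.

Theorem theorem3p5 : forall (n : nat) (a x : R),
  (1 <= n)%nat -> Nat.odd n = true -> 1 <= a -> 0 < x < PI ->
  Sstar n a x >= sin x /\ (Sstar n a x = sin x <-> n = 1%nat).
Proof.
  intros n a x Hn Hodd Ha Hx.
  assert (Hs : 0 < sin x) by (apply sin_gt_0; lra).
  apply Nat.odd_spec in Hodd. destruct Hodd as [m Hm]. subst n.
  unfold Sstar. rewrite sstar_odd.
  set (s := fun j => sin (INR (2*j+1) * x)).
  set (u := fun k => gbinom (2*k) a).
  rewrite (sum_eq _ (fun l => u (m - l)%nat * s l)).
  2:{ intros i Hi. unfold u, s. f_equal. f_equal. lia. }
  rewrite abel.
  destruct m.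
  - simpl. unfold u, s. simpl. rewrite g0, !Rmult_1_l. split; [lra|]. split; auto.
  - rewrite decomp_sum by lia. simpl pred.
    replace (S m - 0)%nat with (S m) by lia.
    assert (Hd : forall k, 0 <= dd u k).
    { intros [|k]; simpl; unfold u.
      - rewrite g0; lra.
      - replace (2 * S k)%nat with (S (S (2*k))) by lia.
        pose proof (g_inc a Ha (S (2*k))). pose proof (g_inc a Ha (2*k)). lra. }
    assert (Hd1 : 2 <= dd u (S m)).
    { simpl; unfold u.
      replace (2 * S m)%nat with (S (S (2*m))) by lia.
      pose proof (g_inc a Ha (S (2*m))). pose proof (g_inc a Ha (2*m)). lra. }
    assert (Hsum : 0 <= sum_f_R0 (fun i => dd u (S m - S i) * sum_f_R0 s (S i)) m).
    { apply cond_pos_sum. intros k. apply Rmult_le_pos; auto. apply Q_nonneg; auto. }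
    assert (HQ0 : sum_f_R0 s 0 = sin x).
    { simpl. unfold s. simpl. rewrite Rmult_1_l. reflexivity. }
    rewrite HQ0.
    split; [nra|]. split; [intros; nra | intros; lia].
Qed.
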